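(* The action of ${\rm PSL}_2(\mathbb Z)$ on $\Delta$ by automorphisms, in which $\rho$ sends $A\mapsto B$, $B\mapsto C$, $C\mapsto A$, $\alpha\mapsto\beta$, $\beta\mapsto\gamma$, $\gamma\mapsto\alpha$ and $\sigma$ sends $A\mapsto B$, $B\mapsto A$, $C\mapsto C+\frac{AB-BA}{q-q^{-1}}$, $\alpha\mapsto\beta$, $\beta\mapsto\alpha$, $\gamma\mapsto\gamma$, is faithful.
   Context: Let $\mathbb F$ be a field and fix a nonzero $q\in\mathbb F$ with $q^4\neq 1$. The universal Askey--Wilson algebra $\Delta$ is the associative $\mathbb F$-algebra with 1 with generators $A,B,C$ subject to the relations that each of $A+\frac{qBC-q^{-1}CB}{q^2-q^{-2}}$, $B+\frac{qCA-q^{-1}AC}{q^2-q^{-2}}$, $C+\frac{qAB-q^{-1}BA}{q^2-q^{-2}}$ is central; $\alpha,\beta,\gamma$ are these three central elements (in order) each multiplied by $q+q^{-1}$. ${\rm PSL}_2(\mathbb Z)$ is presented by generators $\rho,\sigma$ with relations $\rho^3=\sigma^2=1$; the stated assignments define an action of ${\rm PSL}_2(\mathbb Z)$ on $\Delta$ by automorphisms. *)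

(* Defs.v *)
From HB Require Import structures.
From mathcomp Require Import all_boot all_order all_algebra.
From Stdlib Require Import Relations.
Set Implicit Arguments. Unset Strict Implicit. Unset Printing Implicit Defensive.
Import GRing.Theory.
Local Open Scope ring_scope.

Definition central (R : pzRingType) (z : R) : Prop := forall x : R, x * z = z * x.

Definition AW_rels (F : fieldType) (q : F) (R : algType F) (a b c : R) : Prop :=
  [/\ central (a + (q ^+ 2 - q ^- 2)^-1 *: (q *: (b * c) - q^-1 *: (c * b))),
      central (b + (q ^+ 2 - q ^- 2)^-1 *: (q *: (c * a) - q^-1 *: (a * c)))
    & central (c + (q ^+ 2 - q ^- 2)^-1 *: (q *: (a * b) - q^-1 *: (b * a)))].

(* (D; A, B, C) is the universal Askey--Wilson algebra: the F-algebra presented by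
   generators A, B, C and the relations AW_rels, i.e. it satisfies the relations and
   is initial among F-algebras with three elements satisfying them. *)
Definition is_universal_AW (F : fieldType) (q : F) (D : algType F) (A B C : D) : Prop :=
  AW_rels q A B C /\
  forall (R : algType F) (a b c : R), AW_rels q a b c ->
    (exists f : {lrmorphism D -> R}, [/\ f A = a, f B = b & f C = c]) /\
    (forall f g : {lrmorphism D -> R},
        f A = g A -> f B = g B -> f C = g C -> f =1 g).

(* Generators of PSL_2(Z) = < rho, sigma | rho^3 = sigma^2 = 1 >. *)
Inductive psl_gen := Rho | Sig.

(* Words in the generators; since rho^-1 = rho^2 and sigma^-1 = sigma, every group
   element is represented by such a word, and the presented group is the quotient of
   the free monoid by the congruence generated by rho^3 = 1 and sigma^2 = 1. *)
Inductive psl_step : list psl_gen -> list psl_gen -> Prop :=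
  | step_rho (u v : list psl_gen) : psl_step (u ++ Rho :: Rho :: Rho :: v) (u ++ v)
  | step_sig (u v : list psl_gen) : psl_step (u ++ Sig :: Sig :: v) (u ++ v).

Definition psl_eq : list psl_gen -> list psl_gen -> Prop := clos_refl_sym_trans _ psl_step.

Fixpoint word_act (T : Type) (r s : T -> T) (w : list psl_gen) : T -> T :=
  match w with
  | nil => id
  | Rho :: w' => fun x => r (word_act r s w' x)
  | Sig :: w' => fun x => s (word_act r s w' x)
  end.

(* Main.v *)
Require Import Defs.
From HB Require Import structures.
From mathcomp Require Import all_boot all_order all_algebra.
From mathcomp Require Import boolp ring lra zify.
From Stdlib Require Import FunctionalExtensionality ProofIrrelevance Relations.
Set Implicit Arguments. Unset Strict Implicit.
Import GRing.Theory.
Local Open Scope ring_scope.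

Section Ops.
Variable F : fieldType.
Definition V := (int * int)%type -> F.
Record lop := Lop {
  app : V -> V;
  app_add : forall x y : V, app (fun r => x r + y r) = (fun r => app x r + app y r);
  app_scal : forall (k : F) (x : V), app (fun r => k * x r) = (fun r => k * app x r) }.

Lemma lop_ext (f g : lop) : (forall x r, app f x r = app g x r) -> f = g.
Proof.
case: f g => [f fa fs] [g ga gs] /= H.
have E : f = g by apply: functional_extensionality => x; apply: functional_extensionality => r; exact: H.
subst g; f_equal; apply: proof_irrelevance.
Qed.

HB.instance Definition _ := gen_eqMixin lop.
HB.instance Definition _ := gen_choiceMixin lop.

Lemma app0 (f : lop) : app f (fun _ => 0) = (fun _ => 0).
Proof.
have := app_scal f 0 (fun _ => 0).
have -> : (fun r : int * int => (0:F) * 0) = (fun _ => 0) by apply: functional_extensionality => r; rewrite mulr0.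
move=> ->; apply: functional_extensionality => r; by rewrite mul0r.
Qed.

Program Definition lzero : lop := @Lop (fun _ _ => 0) _ _.
Next Obligation. by apply: functional_extensionality => r; rewrite addr0. Qed.
Next Obligation. by apply: functional_extensionality => r; rewrite mulr0. Qed.

Program Definition ladd (f g : lop) : lop := @Lop (fun x r => app f x r + app g x r) _ _.
Next Obligation.
apply: functional_extensionality => r; rewrite (app_add f) (app_add g); by rewrite addrACA.
Qed.
Next Obligation.
apply: functional_extensionality => r; rewrite (app_scal f) (app_scal g); by rewrite mulrDr.
Qed.

Program Definition lopp (f : lop) : lop := @Lop (fun x r => - app f x r) _ _.
Next Obligation. apply: functional_extensionality => r; rewrite (app_add f); by rewrite opprD. Qed.
Next Obligation. apply: functional_extensionality => r; rewrite (app_scal f); by rewrite mulrN. Qed.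

Program Definition lmul (f g : lop) : lop := @Lop (fun x => app f (app g x)) _ _.
Next Obligation. by rewrite (app_add g) (app_add f). Qed.
Next Obligation. by rewrite (app_scal g) (app_scal f). Qed.

Program Definition lone : lop := @Lop (fun x => x) _ _.

Program Definition lscale (k : F) (f : lop) : lop := @Lop (fun x r => k * app f x r) _ _.
Next Obligation. apply: functional_extensionality => r; rewrite (app_add f); by rewrite mulrDr. Qed.
Next Obligation. apply: functional_extensionality => r; rewrite (app_scal f); by rewrite mulrCA. Qed.

Lemma laddA : associative ladd. Proof. by move=> f g h; apply: lop_ext => x r /=; rewrite addrA. Qed.
Lemma laddC : commutative ladd. Proof. by move=> f g; apply: lop_ext => x r /=; rewrite addrC. Qed.
Lemma ladd0 : left_id lzero ladd. Proof. by move=> f; apply: lop_ext => x r /=; rewrite add0r. Qed.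
Lemma laddN : left_inverse lzero lopp ladd. Proof. by move=> f; apply: lop_ext => x r /=; rewrite addNr. Qed.

HB.instance Definition _ := GRing.isZmodule.Build lop laddA laddC ladd0 laddN.

Lemma lmulA : associative lmul. Proof. by move=> f g h; apply: lop_ext. Qed.
Lemma lmul1 : left_id lone lmul. Proof. by move=> f; apply: lop_ext. Qed.
Lemma lmulr1 : right_id lone lmul. Proof. by move=> f; apply: lop_ext. Qed.
Lemma lmulDl : left_distributive lmul (@GRing.add lop). Proof. by move=> f g h; apply: lop_ext. Qed.
Lemma lmulDr : right_distributive lmul (@GRing.add lop).
Proof. move=> f g h; apply: lop_ext => x r /=; by rewrite (app_add f). Qed.
Lemma lone_neq0 : lone != 0 :> lop.
Proof.
apply/eqP => /(f_equal (fun f => app f (fun _ => 1) (0,0))) /=.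
by move/eqP; rewrite oner_eq0.
Qed.

HB.instance Definition _ := GRing.Zmodule_isNzRing.Build lop lmulA lmul1 lmulr1 lmulDl lmulDr lone_neq0.

Lemma lscaleA a b (v : lop) : lscale a (lscale b v) = lscale (a * b) v.
Proof. by apply: lop_ext => x r /=; rewrite mulrA. Qed.
Lemma lscale1 : left_id 1 lscale. Proof. by move=> f; apply: lop_ext => x r /=; rewrite mul1r. Qed.
Lemma lscaleDr : right_distributive lscale +%R. Proof. by move=> a f g; apply: lop_ext => x r /=; rewrite mulrDr. Qed.
Lemma lscaleDl v : {morph lscale^~ v: a b / a + b}. Proof. by move=> a b; apply: lop_ext => x r /=; rewrite mulrDl. Qed.

HB.instance Definition _ := GRing.Zmodule_isLmodule.Build F lop lscaleA lscale1 lscaleDr lscaleDl.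

Lemma lscaleAl (a : F) (u v : lop) : a *: (u * v) = (a *: u) * v.
Proof. by apply: lop_ext. Qed.
HB.instance Definition _ := GRing.Lmodule_isLalgebra.Build F lop lscaleAl.
Lemma lscaleAr (a : F) (u v : lop) : a *: (u * v) = u * (a *: v).
Proof. apply: lop_ext => x r /=. by rewrite (app_scal u). Qed.
HB.instance Definition _ := GRing.Lalgebra_isAlgebra.Build F lop lscaleAr.


End Ops.


Definition vec := (int * int)%type.
Definition vadd (u v : vec) : vec := (u.1 + v.1, u.2 + v.2).
Definition vneg (u : vec) : vec := (- u.1, - u.2).
Definition det (u v : vec) : int := u.1 * v.2 - u.2 * v.1.

Section Emod.
Variable F : fieldType.
Variable q : F.
Hypothesis hq : q != 0.

Program Definition E (p : vec) : lop F :=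
  @Lop F (fun x r => q ^ (det p r) * x (vadd r (vneg p))) _ _.
Next Obligation. by apply: functional_extensionality => r; rewrite mulrDr. Qed.
Next Obligation. by apply: functional_extensionality => r; rewrite mulrCA. Qed.

Lemma qunit : q \is a GRing.unit. Proof. by rewrite unitfE. Qed.

Lemma EM p s : E p * E s = q ^ det p s *: E (vadd p s).
Proof.
apply: lop_ext => x r /=.
rewrite mulrA -exprzDr ?qunit // mulrA -exprzDr ?qunit //.
case: p s r => [p1 p2] [s1 s2] [r1 r2]; rewrite /det /vadd /vneg /=.
congr (q ^ _ * x (_, _)); ring.
Qed.

Definition T (p : vec) : lop F := E p + E (vneg p).

Lemma Evec u v : u.1 = v.1 -> u.2 = v.2 -> E u = E v.
Proof. by case: u v => [u1 u2] [v1 v2] /= -> ->. Qed.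

Lemma Tvec u v : u.1 = v.1 -> u.2 = v.2 -> T u = T v.
Proof. by case: u v => [u1 u2] [v1 v2] /= -> ->. Qed.

Lemma TN u : T (vneg u) = T u.
Proof.
rewrite /T addrC; congr (_ + _); apply: Evec; by rewrite /= opprK.
Qed.

Definition vsub u v := vadd u (vneg v).

Lemma TM p s : T p * T s = q ^ det p s *: T (vadd p s) + q ^ (- det p s) *: T (vsub p s).
Proof.
rewrite /T mulrDl !mulrDr !EM.
have d1 : det p (vneg s) = - det p s by rewrite /det /=; ring.
have d2 : det (vneg p) s = - det p s by rewrite /det /=; ring.
have d3 : det (vneg p) (vneg s) = det p s by rewrite /det /=; ring.
rewrite d1 d2 d3.
have -> : E (vadd (vneg p) (vneg s)) = E (vneg (vadd p s)) by apply: Evec => /=; ring.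
have -> : E (vadd (vneg p) s) = E (vneg (vsub p s)) by apply: Evec => /=; ring.
rewrite !scalerDr.
rewrite /vsub. 
set a := _ *: E (vadd p s). set b := _ *: E (vadd p (vneg s)).
set c := _ *: E (vneg (vadd p s)). set d := _ *: E (vneg (vadd p _)).
rewrite -!addrA; congr (_ + _); rewrite [in RHS]addrC -!addrA; congr (_ + _); by rewrite addrC.
Qed.
End Emod.


Section AW.
Variable F : fieldType.
Variable q : F.
Hypothesis hq : q != 0.
Hypothesis hq4 : q ^+ 4 != 1.

Lemma q2ne : q ^+ 2 - q ^- 2 != 0.
Proof.
apply/eqP => /eqP; rewrite subr_eq0 => /eqP H.
move/eqP: hq4; apply.
have q2 : q ^+ 2 != 0 by rewrite expf_neq0.
by rewrite (_ : 4 = 2 + 2)%N // exprD {1}H mulVf.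
Qed.

Lemma q1ne : q - q^-1 != 0.
Proof.
apply/eqP => /eqP; rewrite subr_eq0 => /eqP H.
move/eqP: q2ne; apply.
by rewrite -exprVn -H subrr.
Qed.

Lemma combo (X Y : lop F) :
  (q ^+ 2 - q ^- 2)^-1 *: (q *: (q ^ (-1) *: X + q ^ 1 *: Y) - q^-1 *: (q ^ 1 *: X + q ^ (-1) *: Y)) = Y.
Proof.
have -> : q *: (q ^ (-1) *: X + q ^ 1 *: Y) - q^-1 *: (q ^ 1 *: X + q ^ (-1) *: Y)
   = (q ^+ 2 - q ^- 2) *: Y.
  rewrite exprN1 expr1z !scalerDr !scalerA mulfV // mulVf // opprD addrACA subrr add0r -scalerBl.
  by rewrite -!expr2 exprVn.
by rewrite scalerA mulVf ?q2ne // scale1r.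
Qed.

Lemma central0 (R : pzRingType) : central (0 : R).
Proof. by move=> x; rewrite mulr0 mul0r. Qed.

Lemma TM1 (p s : vec) : det p s = 1 ->
  T q p * T q s = q ^ 1 *: T q (vadd p s) + q ^ (-1) *: T q (vsub p s).
Proof. move=> h; by rewrite TM // h. Qed.

Lemma TMm1 (p s : vec) : det p s = -1 ->
  T q p * T q s = q ^ (-1) *: T q (vadd p s) + q ^ 1 *: T q (vsub p s).
Proof. move=> h; by rewrite TM // h opprK. Qed.

Ltac vtac := apply: Tvec => /=; ring.

Lemma AWT (p s : vec) : det p s = 1 ->
  AW_rels q (- T q p) (- T q s) (- T q (vadd p s)).
Proof.
move=> h; split; rewrite !mulrNN.
- rewrite (TMm1 (p := s) (s := vadd p s)); last by move: h; rewrite /det /=; lia.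
  rewrite (TM1 (p := vadd p s) (s := s)); last by move: h; rewrite /det /=; lia.
  have -> : T q (vsub s (vadd p s)) = T q p.
    by rewrite -(TN q p); vtac.
  have -> : T q (vsub (vadd p s) s) = T q p by vtac.
  have -> : T q (vadd s (vadd p s)) = T q (vadd (vadd p s) s) by vtac.
  rewrite combo addNr; exact: central0.
- rewrite (TMm1 (p := vadd p s) (s := p)); last by move: h; rewrite /det /=; lia.
  rewrite (TM1 (p := p) (s := vadd p s)); last by move: h; rewrite /det /=; lia.
  have -> : T q (vsub p (vadd p s)) = T q s.
    by rewrite -(TN q s); vtac.
  have -> : T q (vsub (vadd p s) p) = T q s by vtac.
  have -> : T q (vadd p (vadd p s)) = T q (vadd (vadd p s) p) by vtac.
  rewrite combo addNr; exact: central0.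
- rewrite (TM1 (p := p) (s := s)) //.
  rewrite (TMm1 (p := s) (s := p)); last by move: h; rewrite /det /=; lia.
  have -> : T q (vsub s p) = T q (vsub p s).
    by rewrite -(TN q (vsub p s)); vtac.
  have -> : T q (vadd s p) = T q (vadd p s) by vtac.
  set X := T q (vsub p s); set Y := T q (vadd p s).
  have -> : q ^ 1 *: Y + q ^ (-1) *: X = q ^ (-1) *: X + q ^ 1 *: Y by rewrite addrC.
  have -> : q ^ (-1) *: Y + q ^ 1 *: X = q ^ 1 *: X + q ^ (-1) *: Y by rewrite addrC.
  rewrite combo addNr; exact: central0.
Qed.

Lemma sigT (p s : vec) : det p s = 1 ->
  - T q (vadd p s) + (q - q^-1)^-1 *: (- T q p * - T q s - - T q s * - T q p) = - T q (vsub p s).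
Proof.
move=> h; rewrite !mulrNN (TM1 h) (TMm1 (p := s) (s := p)); last by move: h; rewrite /det /=; lia.
have -> : T q (vsub s p) = T q (vsub p s).
  by rewrite -(TN q (vsub p s)); vtac.
have -> : T q (vadd s p) = T q (vadd p s) by vtac.
rewrite exprN1 expr1z.
set X := T q (vsub p s); set Y := T q (vadd p s).
have -> : q *: Y + q^-1 *: X - (q^-1 *: Y + q *: X) = (q - q^-1) *: (Y - X).
  by rewrite opprD addrACA -!scalerBl scalerBr -scaleNr opprB.
by rewrite scalerA mulVf ?q1ne // scale1r addrA addNr add0r.
Qed.

Definition delta0 : V F := fun r => if r == (0, 0) then 1 else 0.

Lemma Tval u r : app (T q u) delta0 r =
  q ^ det u r * delta0 (vadd r (vneg u)) + q ^ det (vneg u) r * delta0 (vadd r (vneg (vneg u))).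
Proof. by []. Qed.

Lemma Tinj u v : v != (0, 0) -> T q u = T q v -> u = v \/ u = vneg v.
Proof.
move=> hv H.
have := f_equal (fun f => app f delta0 v) H; clear H; rewrite !Tval /delta0.
have -> : det v v = 0 by rewrite /det; ring.
have -> : vadd v (vneg v) = (0,0) by case: v hv => a b _; rewrite /vadd /vneg /= !subrr.
rewrite eqxx expr0z mul1r.
have -> : (vadd v (vneg (vneg v)) == (0, 0)) = false.
  case: v hv => a b; rewrite /vadd /vneg /= !opprK !xpair_eqE => hv.
  apply/negbTE; apply: contra hv => /andP [/eqP h1 /eqP h2]; apply/andP; split; apply/eqP; lia.
rewrite mulr0 addr0.
case: (boolP (vadd v (vneg u) == (0,0))) => [e1|n1].
  by left; move: e1; clear; case: u v => [a b] [c d]; rewrite /vadd /vneg /= xpair_eqE => /andP [/eqP h1 /eqP h2]; congr pair; lia.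
case: (boolP (vadd v (vneg (vneg u)) == (0,0))) => [e2|n2].
  by right; move: e2; clear; case: u v => [a b] [c d]; rewrite /vadd /vneg /= xpair_eqE => /andP [/eqP h1 /eqP h2]; congr pair; lia.
by rewrite !mulr0 addr0 => /eqP; rewrite eq_sym oner_eq0.
Qed.
End AW.


Definition st := (vec * vec)%type.

Definition phi (x : psl_gen) (g : st) : st :=
  match x with
  | Rho => (g.2, (- (g.1.1 + g.2.1), - (g.1.2 + g.2.2)))
  | Sig => (g.2, (- g.1.1, - g.1.2))
  end.

Definition Phi (w : list psl_gen) (g : st) : st := foldl (fun g x => phi x g) g w.

Definition gneg (g : st) : st := ((- g.1.1, - g.1.2), (- g.2.1, - g.2.2)).

Lemma Phi_cat u v g : Phi (u ++ v) g = Phi v (Phi u g).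
Proof. by rewrite /Phi foldl_cat. Qed.

Lemma phi_neg x g : phi x (gneg g) = gneg (phi x g).
Proof.
case: g => [[a b] [c d]]; case: x; rewrite /phi /gneg /=; congr (_, _); congr (_, _); ring.
Qed.

Lemma Phi_neg w g : Phi w (gneg g) = gneg (Phi w g).
Proof. elim: w g => [|x w IH] g //=; by rewrite phi_neg IH. Qed.

Lemma gnegK g : gneg (gneg g) = g.
Proof. by case: g => [[a b] [c d]]; rewrite /gneg /= !opprK. Qed.

Definition pmeq (g h : st) := g = h \/ g = gneg h.

Lemma Phi_RRR g : Phi [:: Rho; Rho; Rho] g = g.
Proof. case: g => [[a b] [c d]]; rewrite /Phi /=; congr ((_, _), (_, _)); ring. Qed.
Lemma Phi_SS g : Phi [:: Sig; Sig] g = gneg g.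
Proof. by case: g => [[a b] [c d]]. Qed.

Lemma step_pm u v g : psl_step u v -> pmeq (Phi u g) (Phi v g).
Proof.
case=> {u v} u v.
- rewrite (_ : Rho :: Rho :: Rho :: v = [:: Rho; Rho; Rho] ++ v) // !Phi_cat Phi_RRR; by left.
- rewrite (_ : Sig :: Sig :: v = [:: Sig; Sig] ++ v) // !Phi_cat Phi_SS Phi_neg; by right.
Qed.

Lemma pm_eq u v g : psl_eq u v -> pmeq (Phi u g) (Phi v g).
Proof.
elim=> {u v} [u v /step_pm //| u | u v _ [->|->] | u v w _ [->|->] _ [->|->]].
- by left.
- by left.
- by right; rewrite gnegK.
- by left.
- by right.
- by right.
- by left; rewrite gnegK.
Qed.

Lemma psl_cons x u v : psl_eq u v -> psl_eq (x :: u) (x :: v).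
Proof.
elim=> {u v} [u v [] u' v' | u | u v _ IH | u v w _ IH1 _ IH2].
- apply: rst_step; exact: (step_rho (x :: u') v').
- apply: rst_step; exact: (step_sig (x :: u') v').
- exact: rst_refl.
- exact: rst_sym.
- exact: rst_trans IH2.
Qed.

Inductive ex := E1 | E2.
Definition nf := (option ex * seq ex * bool)%type.
Definition rwe (e : ex) : seq psl_gen := if e is E1 then [:: Rho] else [:: Rho; Rho].
Definition rw (e : option ex) : seq psl_gen := if e is Some e' then rwe e' else [::].
Fixpoint blocks (bs : seq ex) : seq psl_gen :=
  if bs is b :: bs' then (Sig :: rwe b) ++ blocks bs' else [::].
Definition tl (d : bool) : seq psl_gen := if d then [:: Sig] else [::].
Definition toword (n : nf) : seq psl_gen := rw n.1.1 ++ blocks n.1.2 ++ tl n.2.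

Definition nf_cons (x : psl_gen) (n : nf) : nf :=
  match x, n with
  | Rho, (None, bs, d) => (Some E1, bs, d)
  | Rho, (Some E1, bs, d) => (Some E2, bs, d)
  | Rho, (Some E2, bs, d) => (None, bs, d)
  | Sig, (Some e, bs, d) => (None, e :: bs, d)
  | Sig, (None, e :: bs, d) => (Some e, bs, d)
  | Sig, (None, [::], d) => (None, [::], ~~ d)
  end.

Definition nf0 : nf := (None, [::], false).

Lemma nf_cons_eq x n : psl_eq (x :: toword n) (toword (nf_cons x n)).
Proof.
case: x; case: n => [[[[]|] [|b bs]] d]; rewrite /toword /=; try exact: rst_refl;
 try (apply: rst_step; exact: (step_rho [::] _));
 try (apply: rst_step; exact: (step_sig [::] _)).
all: try (by case: b; rewrite /= -?catA; exact: rst_refl).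
all: try (by case: b; apply: rst_step; exact: (step_sig [::] _)).
all: case: d => /=; try exact: rst_refl.
apply: rst_step; exact: (step_sig [::] [::]).
Qed.

Definition nfw (w : seq psl_gen) : nf := foldr nf_cons nf0 w.

Lemma nfw_eq w : psl_eq w (toword (nfw w)).
Proof.
elim: w => [|x w IH] /=; first exact: rst_refl.
apply: rst_trans (nf_cons_eq x (nfw w)); exact: psl_cons.
Qed.


Definition I0 : st := ((1, 0), (0, 1)).
Definition pm (g : st) := g = I0 \/ g = gneg I0.

Definition mv (G : st) (v : vec) : vec :=
  (v.1 * G.1.1 + v.2 * G.2.1, v.1 * G.1.2 + v.2 * G.2.2).
Definition mm (G H : st) : st := (mv G H.1, mv G H.2).

Lemma phi_mm x G H : phi x (mm G H) = mm G (phi x H).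
Proof.
case: G H => [[a b] [c d]] [[e f] [g h]]; case: x; rewrite /phi /mm /mv /=;
  congr ((_, _), (_, _)); ring.
Qed.

Lemma Phi_mm w G H : Phi w (mm G H) = mm G (Phi w H).
Proof. elim: w H => [|x w IH] H //=; by rewrite phi_mm IH. Qed.

Lemma mmI G : mm G I0 = G.
Proof. case: G => [[a b] [c d]]; rewrite /mm /mv /=; congr ((_, _), (_, _)); ring. Qed.

Definition good (g : st) := exists (sg : bool) (a b c d : int),
  [/\ 0 <= a, 0 <= b, 0 <= c, 0 <= d & 3 <= a + b + c + d] /\
  g = if sg then ((a, - c), (- b, d)) else ((- a, c), (b, - d)).

Lemma good_blk e g : good g -> good (Phi (Sig :: rwe e) g).
Proof.
case=> sg [a [b [c [d [[ha hb hc hd hs] ->]]]]].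
case: e; case: sg; rewrite /Phi /=.
- exists false, a, (a + b), c, (c + d); split; [split; lia | congr ((_, _), (_, _)); ring].
- exists true, a, (a + b), c, (c + d); split; [split; lia | congr ((_, _), (_, _)); ring].
- exists true, (a + b), b, (c + d), d; split; [split; lia | congr ((_, _), (_, _)); ring].
- exists false, (a + b), b, (c + d), d; split; [split; lia | congr ((_, _), (_, _)); ring].
Qed.

Lemma good_blocks bs g : good g -> good (Phi (blocks bs) g).
Proof.
elim: bs g => [|b bs IH] g hg //=.
rewrite Phi_cat; apply: IH; exact: good_blk.
Qed.

Lemma good_first b : good (Phi (Sig :: rwe b) I0).
Proof.
case: b; rewrite /Phi /=.
- exists false, 1, 1, 0, 1; split; [split; lia | congr ((_, _), (_, _)); ring].
- exists true, 1, 0, 1, 1; split; [split; lia | congr ((_, _), (_, _)); ring].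
Qed.

Lemma nf_triv n : pm (Phi (toword n) I0) -> n = nf0.
Proof.
case: n => [[e bs] d]; rewrite /toword /= !Phi_cat.
rewrite -[Phi (rw e) I0]mmI Phi_mm.
case: bs => [|b bs].
  case: e => [[]|]; case: d; rewrite /Phi /mm /mv /pm /I0 /gneg /=; 
  move=> [H|H]; move: H; try done; case=> *; lia.
have : good (Phi (blocks (b :: bs)) I0).
  rewrite /= Phi_cat; apply: good_blocks; exact: good_first.
case=> sg [a0 [b0 [c0 [d0 [[ha hb hc hd hs] ->]]]]].
case: e => [[]|]; case: d; case: sg; rewrite /Phi /mm /mv /pm /I0 /gneg /=;
  move=> [H|H]; move: H; case=> *; lia.
Qed.


Lemma pm_word w : pm (Phi w I0) -> psl_eq w nil.
Proof.
move=> hw.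
have h2 : pm (Phi (toword (nfw w)) I0).
  case: (pm_eq I0 (nfw_eq w)) => E.
    by rewrite -E.
  case: hw => hw; [right | left]; by rewrite -[Phi _ _]gnegK -E hw ?gnegK.
have := nf_triv h2 => hn.
have := nfw_eq w; by rewrite hn.
Qed.

Lemma det_phi x (g : st) : det g.1 g.2 = 1 -> det (phi x g).1 (phi x g).2 = 1.
Proof.
move=> h; rewrite -h; case: g {h} => [[a b] [c d]]; case: x; rewrite /det /phi /=; ring.
Qed.

Lemma Phi_det w (g : st) : det g.1 g.2 = 1 -> det (Phi w g).1 (Phi w g).2 = 1.
Proof. elim: w g => [|x w IH] g h //=; apply: IH; exact: det_phi. Qed.

Section Main.
Variable F : fieldType.
Variable q : F.
Hypothesis hq : q != 0.
Hypothesis hq4 : q ^+ 4 != 1.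
Variables (D : algType F) (A B C : D).
Hypothesis hD : is_universal_AW q A B C.
Variables (rho sigma : {lrmorphism D -> D}).
Hypotheses (hrA : rho A = B) (hrB : rho B = C) (hrC : rho C = A)
  (hsA : sigma A = B) (hsB : sigma B = A)
  (hsC : sigma C = C + (q - q^-1)^-1 *: (A * B - B * A)).

Definition rel (h : {lrmorphism D -> lop F}) (g : st) :=
  [/\ h A = - T q g.1, h B = - T q g.2 & h C = - T q (vadd g.1 g.2)].

Lemma act w : forall (g : st) (h h' : {lrmorphism D -> lop F}),
  det g.1 g.2 = 1 -> rel h g -> rel h' (Phi w g) ->
  forall x, h (word_act rho sigma w x) = h' x.
Proof.
elim: w => [|y w IH] g h h' hd [hA hB hC].
  case=> h'A h'B h'C x /=.
  have := (hD.2 (lop F) _ _ _ (AWT hq hq4 hd)).2 h h'.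
  by apply; rewrite ?hA ?hB ?hC ?h'A ?h'B ?h'C.
move=> hr x.
case: y hr => hr /=.
- change (h (rho (word_act rho sigma w x))) with ((h \o rho) (word_act rho sigma w x)).
  apply: (IH (phi Rho g)) => //; first exact: det_phi.
  split => /=.
  + by rewrite hrA hB.
  + rewrite hrB hC -TN; congr (- T q _); case: g {hd hA hB hC hr} => [[a b] [c d]] //.
  + rewrite hrC hA -TN; congr (- T q _); case: g {hd hA hB hC hr} => [[a b] [c d]].
    rewrite /vadd /vneg /=; congr (_, _); ring.
- change (h (sigma (word_act rho sigma w x))) with ((h \o sigma) (word_act rho sigma w x)).
  apply: (IH (phi Sig g)) => //; first exact: det_phi.
  split => /=.
  + by rewrite hsA hB.
  + rewrite hsB hA -TN; congr (- T q _); case: g {hd hA hB hC hr} => [[a b] [c d]] //.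
  + have hZ : forall (k : F) (v : D), h (k *: v) = k *: h v by move=> k v; exact: linearZ.
    rewrite hsC linearD /= hZ linearB /= !rmorphM /= hA hB hC (sigT hq hq4 hd) -TN.
    congr (- T q _); case: g {hd hA hB hC hr} => [[a b] [c d]].
    rewrite /vsub /vadd /vneg /=; congr (_, _); ring.
Qed.

Lemma exists_rel (g : st) : det g.1 g.2 = 1 -> exists h, rel h g.
Proof.
move=> hd; have [[f [fA fB fC]] _] := hD.2 (lop F) _ _ _ (AWT hq hq4 hd).
by exists f; split.
Qed.

Lemma main_lemma w : (forall x : D, word_act rho sigma w x = x) -> psl_eq w nil.
Proof.
move=> hw.
have d0 : det I0.1 I0.2 = 1 by [].
have [h0 r0] := exists_rel d0.
have [h1 r1] := exists_rel (g := Phi w I0) (Phi_det w d0).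
have E x : h0 x = h1 x by rewrite -(act d0 r0 r1 x) hw.
apply: pm_word.
case: r0 => h0A h0B h0C; case: r1 => h1A h1B h1C.
have eA : T q (Phi w I0).1 = T q I0.1 by apply: oppr_inj; rewrite -h1A -h0A E.
have eB : T q (Phi w I0).2 = T q I0.2 by apply: oppr_inj; rewrite -h1B -h0B E.
have eC : T q (vadd (Phi w I0).1 (Phi w I0).2) = T q (vadd I0.1 I0.2)
  by apply: oppr_inj; rewrite -h1C -h0C E.
move: (Tinj hq hq4 (isT : I0.1 != (0,0)) eA) (Tinj hq hq4 (isT : I0.2 != (0,0)) eB)
      (Tinj hq hq4 (isT : vadd I0.1 I0.2 != (0,0)) eC).
case: (Phi w I0) => [[a b] [c d]]; rewrite /I0 /vadd /vneg /pm /gneg /=.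
move=> [H1|H1] [H2|H2] [H3|H3]; case: H1 => k1 k2; case: H2 => k3 k4; case: H3 => k5 k6;
  first [ by left; congr ((_, _), (_, _)); lia | by right; congr ((_, _), (_, _)); lia | lia ].
Qed.
End Main.

Unset Implicit Arguments.

Theorem theorem3p13 (F : fieldType) (q : F) (hq0 : q != 0) (hq4 : q ^+ 4 != 1)
  (D : algType F) (A B C : D) (hD : is_universal_AW q A B C)
  (rho sigma : {lrmorphism D -> D})
  (hrA : rho A = B) (hrB : rho B = C) (hrC : rho C = A)
  (hsA : sigma A = B) (hsB : sigma B = A)
  (hsC : sigma C = C + (q - q^-1)^-1 *: (A * B - B * A)) :
  forall w : list psl_gen,
    (forall x : D, word_act rho sigma w x = x) -> psl_eq w nil.
Proof.
exact: (main_lemma hq0 hq4 hD hrA hrB hrC hsA hsB hsC).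
Qed.
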